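(* Let $G,H$ be graphs, let $a,b$ be vertices of $G$, and let $\alpha,\beta,\gamma,\kappa$ be vertices of $H$. There is perfect state transfer between the pair state of $\{(a,\alpha),(a,\beta)\}$ and the pair state of $\{(b,\gamma),(b,\kappa)\}$ in the Cartesian product $G\square H$ at time $t$ if and only if both: (i) there is perfect Laplacian vertex state transfer between $a$ and $b$ in $G$ at time $t$; and (ii) there is perfect pair state transfer between $e_\alpha-e_\beta$ and $e_\gamma-e_\kappa$ in $H$ at time $t$.
   Context: All graphs are finite and simple. The Cartesian product $G\square H$ has vertex set $V(G)\times V(H)$, with $(g_1,h_1)\sim(g_2,h_2)$ iff either $g_1=g_2$ and $h_1\sim h_2$ in $H$, or $g_1\sim g_2$ in $G$ and $h_1=h_2$. For a graph $X$ with Laplacian $L=\Delta-A$, set $U_X(t)=\exp(itL)$. Perfect pair state transfer between $e_x-e_y$ and $e_z-e_w$ at time $t$ means $U_X(t)(e_x-e_y)=\gamma(e_z-e_w)$ for some $\gamma\in\mathbb{C}$, $|\gamma|=1$; the pair state of a pair $\{x,y\}$ is $e_x-e_y$. Perfect Laplacian vertex state transfer between vertices $a,b$ at time $t$ means $U_X(t)e_a=\gamma e_b$ for some $|\gamma|=1$. *)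

(* Defs.v *)
From HB Require Import structures.
From mathcomp Require Import all_boot all_order all_algebra.
From mathcomp Require Import all_classical all_reals all_analysis.
From mathcomp Require Import complex.
Set Implicit Arguments. Unset Strict Implicit. Unset Printing Implicit Defensive.
Import Order.TTheory GRing.Theory Num.Theory.
Local Open Scope ring_scope.
Local Open Scope complex_scope.

Definition simple_graph (V : finType) (adj : rel V) : Prop :=
  symmetric adj /\ irreflexive adj.

Definition cart_adj (V W : finType) (adjG : rel V) (adjH : rel W) :
  rel (V * W) :=
  fun p q => ((p.1 == q.1) && adjH p.2 q.2) || (adjG p.1 q.1 && (p.2 == q.2)).

Definition expm (R : realType) (n : nat) (A : 'M[R[i]]_n) : 'M[R[i]]_n :=
  limn (series (fun k : nat => (k`!%:R)^-1 *: A ^+ k)).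

(* Vertices x : V are identified with indices enum_rank x : 'I_#|V|. *)

Definition laplacian (R : realType) (V : finType) (adj : rel V) :
  'M[R[i]]_#|V| :=
  \matrix_(i, j)
    ((if i == j then (#|[set y | adj (enum_val i) y]|)%:R else 0)
     - (if adj (enum_val i) (enum_val j) then 1 else 0)).

Definition U (R : realType) (V : finType) (adj : rel V) (t : R) :
  'M[R[i]]_#|V| :=
  expm (('i * t%:C) *: laplacian R adj).

Definition e_ (R : realType) (V : finType) (x : V) : 'cV[R[i]]_#|V| :=
  \col_i (if i == enum_rank x then 1 else 0).

Definition pair_state (R : realType) (V : finType) (x y : V) :
  'cV[R[i]]_#|V| := e_ R x - e_ R y.

Definition pair_PST (R : realType) (V : finType) (adj : rel V) (t : R)
  (x y z w : V) : Prop :=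
  exists g : R[i], `|g| = 1 /\
    U adj t *m pair_state R x y = g *: pair_state R z w.

Definition vertex_PST (R : realType) (V : finType) (adj : rel V) (t : R)
  (a b : V) : Prop :=
  exists g : R[i], `|g| = 1 /\ U adj t *m e_ R a = g *: e_ R b.

(* Main.v *)
Require Import Defs.
From HB Require Import structures.
From mathcomp Require Import all_boot all_order all_algebra.
From mathcomp Require Import all_classical all_reals all_analysis.
From mathcomp Require Import complex.
From mathcomp Require Import ring lra.
Import Order.TTheory GRing.Theory Num.Theory.
Local Open Scope ring_scope.

Module Aux.
Import numFieldTopology.Exports numFieldNormedType.Exports.
Set Implicit Arguments. Unset Strict Implicit. Unset Printing Implicit Defensive.
Local Open Scope classical_set_scope.
Local Open Scope ring_scope.
Local Open Scope complex_scope.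


Lemma binom_coef (K : numFieldType) k i (x : K) : (i <= k)%N ->
  (k`!%:R)^-1 * (x *+ 'C(k, i)) = ((k - i)%N`!%:R)^-1 * (i`!%:R)^-1 * x.
Proof.
move=> ik; rewrite -(bin_fact ik) !natrM -mulr_natr.
have h1 : ('C(k, i)%:R : K) != 0 by rewrite pnatr_eq0 -lt0n bin_gt0.
have h2 : (i`!%:R : K) != 0 by rewrite pnatr_eq0 -lt0n fact_gt0.
have h3 : ((k - i)`!%:R : K) != 0 by rewrite pnatr_eq0 -lt0n fact_gt0.
by field; rewrite h1 h2 h3.
Qed.

Lemma tri_sum (K : zmodType) (f : nat -> nat -> K) N :
  \sum_(0 <= k < N) \sum_(0 <= i < k.+1) f (k - i)%N i =
  \sum_(0 <= j < N) \sum_(0 <= m < (N - j)%N) f m j.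
Proof.
elim: N => [|N IH]; first by rewrite !big_geq.
rewrite big_nat_recr //= IH.
have E : \sum_(0 <= j < N) \sum_(0 <= m < (N.+1 - j)%N) f m j =
         \sum_(0 <= j < N) (\sum_(0 <= m < (N - j)%N) f m j + f (N - j)%N j).
  rewrite big_nat_cond [RHS]big_nat_cond; apply: eq_bigr => j /andP[/andP[_ jN] _].
  by rewrite subSn ?(ltnW jN) // big_nat_recr.
rewrite [RHS]big_nat_recr //= E big_split /= subSnn big_nat1.
by rewrite big_nat_recr //= subnn addrA.
Qed.

Lemma cauchy_diff (K : comPzRingType) (a b : nat -> K) N :
  (\sum_(0 <= m < N) a m) * (\sum_(0 <= j < N) b j)
  - \sum_(0 <= k < N) \sum_(0 <= i < k.+1) a (k - i)%N * b i =
  \sum_(0 <= j < N) \sum_((N - j)%N <= m < N) a m * b j.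
Proof.
rewrite (tri_sum (fun m j => a m * b j)) big_distrr /= -sumrB.
apply: eq_big_nat => j /andP[_ jN].
rewrite big_distrl /= (@big_cat_nat _ _ _ (N - j)%N) ?leq_subr //=.
by rewrite addrAC subrr add0r.
Qed.

Lemma exp_coeff_conv (R : realType) (x y : R) k :
  \sum_(0 <= i < k.+1) exp_coeff x (k - i)%N * exp_coeff y i = exp_coeff (x + y) k.
Proof.
rewrite /exp_coeff /= exprDn mulrC big_distrr /= big_mkord.
apply: eq_bigr => i _; rewrite binom_coef; last by rewrite -ltnS.
ring.
Qed.

Section An.
Variable R : realType.
Local Notation C := (Num.NumField.sort (R[i] : numFieldType)).

Lemma normC_real (k : R) : `|k%:C| = `|k|%:C :> C.
Proof. by rewrite -complexr0; simpc; rewrite expr0n /= addr0 sqrtr_sqr. Qed.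

Lemma pos_realC (e : C) : 0 < e -> e = (complex.Re e)%:C /\ 0 < complex.Re e.
Proof.
move=> e0; have := RRe_real (gtr0_real e0) => He.
split; first by rewrite He.
by rewrite -ltcR He.
Qed.

Lemma cvgC (u : nat -> R) (r : R) :
  u @ \oo --> r -> (fun n => (u n)%:C : C) @ \oo --> (r%:C : C).
Proof.
move=> /cvgrPdist_lt H; apply/cvgrPdist_lt => e /pos_realC [-> e0].
near=> n; rewrite -rmorphB normC_real ltcR; near: n; exact: H.
Unshelve. all: by end_near. Qed.

Lemma dom0 (u : nat -> C) (w : nat -> R) :
  w @ \oo --> 0 -> (forall n, `|u n| <= (w n)%:C) -> u @ \oo --> (0 : C).
Proof.
move=> /cvgr0Pnorm_lt H uw; apply/cvgr0Pnorm_lt => e /pos_realC [-> e0].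
near=> n; apply: (le_lt_trans (uw n)).
rewrite ltcR; apply: (le_lt_trans (ler_norm _)); near: n; exact: H.
Unshelve. all: by end_near. Qed.

Lemma normC_Im (x : C) : `|complex.Im x|%:C <= `|x|.
Proof.
have := normc_ge_Re (x * 'i); rewrite ReiNIm normrN normrM.
suff -> : `|'i : C| = 1 by rewrite mulr1.
simpc. rewrite expr0n expr1n /= add0r sqrtr1 //.
Qed.

Lemma series_dom (u : nat -> C) (v : nat -> R) :
  (forall k, `|u k| <= (v k)%:C) -> cvgn (series v) -> cvgn (series u).
Proof.
move=> uv cv.
have v0 k : 0 <= v k by rewrite -ler0c (le_trans _ (uv k)).
set re := fun k => complex.Re (u k); set im := fun k => complex.Im (u k).
have cre : cvgn (series re).
  apply: (@normed_cvg _ R^o); apply: (series_le_cvg _ v0 _ cv) => k /=; first exact: normr_ge0.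
  rewrite -lecR; exact: le_trans (normc_ge_Re _) (uv k).
have cim : cvgn (series im).
  apply: (@normed_cvg _ R^o); apply: (series_le_cvg _ v0 _ cv) => k /=; first exact: normr_ge0.
  rewrite -lecR; exact: le_trans (normC_Im _) (uv k).
have E : series u = fun n => (series re n)%:C + 'i * (series im n)%:C.
  apply/funext => n; rewrite /series /= rmorph_sum rmorph_sum mulr_sumr -big_split /=.
  by apply: eq_bigr => k _; rewrite [LHS]complexE.
apply/cvg_ex; exists ((limn (series re))%:C + 'i * (limn (series im))%:C : C).
rewrite E; apply: cvgD; first exact: cvgC.
by apply: cvgM; [exact: cvg_cst | exact: cvgC].
Qed.
Lemma mx_cvg_entry m n (S : nat -> 'M[C]_(m, n)) (L : 'M[C]_(m, n)) :
  (forall i j, (fun N => S N i j) @ \oo --> L i j) -> S @ \oo --> L.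
Proof.
move=> H; apply/cvg_ballP => e e0.
have H' : forall i j, \forall N \near \oo, ball (L i j) e (S N i j).
  by move=> i j; apply: (cvg_ball (H i j)).
have H2 : forall i, \forall N \near \oo, forall j, ball (L i j) e (S N i j).
  by move=> i; apply: filter_forall.
apply: filterS (filter_forall _ H2) => N HN.
by split => // i j; exact: HN i j.
Qed.

Lemma mx_entry_cvg m n (S : nat -> 'M[C]_(m, n)) (L : 'M[C]_(m, n)) i j :
  S @ \oo --> L -> (fun N => S N i j) @ \oo --> L i j.
Proof.
move=> H; exact: (continuous_cvg _ (@coord_continuous _ m n i j L) H).
Qed.
Lemma cvg_big_seq (I : Type) (s : seq I) (f : I -> nat -> C) (l : I -> C) :
  (forall i, f i @ \oo --> l i) ->
  (fun N => \sum_(i <- s) f i N) @ \oo --> \sum_(i <- s) l i.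
Proof.
move=> H; elim: s => [|x s IH].
  by rewrite big_nil; under eq_fun do rewrite big_nil; exact: cvg_cst.
rewrite big_cons; under eq_fun do rewrite big_cons.
exact: cvgD (H x) IH.
Qed.

Lemma term_le_sum (I : finType) (F : I -> C) i :
  (forall j, 0 <= F j) -> F i <= \sum_j F j.
Proof. by move=> F0; rewrite (bigD1 i) //= lerDl sumr_ge0. Qed.

Lemma mx_bound m n (X : 'M[C]_(m, n)) :
  exists B : R, 0 <= B /\ forall i j, `|X i j| <= B%:C.
Proof.
set s : C := \sum_i \sum_j `|X i j|.
have s0 : 0 <= s by rewrite sumr_ge0 // => i _; rewrite sumr_ge0.
exists (complex.Re s); split.
  by rewrite -ler0c (RRe_real (ger0_real s0)).
move=> i j; rewrite (RRe_real (ger0_real s0)).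
have h1 := @term_le_sum _ (fun j => `|X i j| : C) j (fun _ => normr_ge0 _).
have h2 := @term_le_sum _ (fun i => \sum_j `|X i j| : C) i (fun k => sumr_ge0 _ (fun _ _ => normr_ge0 _)).
exact: le_trans h1 h2.
Qed.

Lemma mx_pow_bound n (X : 'M[C]_n) (B : R) : 0 <= B ->
  (forall i j, `|X i j| <= B%:C) ->
  forall k i j, `|(X ^+ k) i j| <= ((n%:R * B) ^+ k)%:C.
Proof.
move=> B0 XB; elim=> [|k IH] i j.
  rewrite expr0 expr0 mxE; case: (i == j) => /=; by rewrite ?normr1 ?normr0 ?ler0c.
rewrite exprSr mxE; apply: le_trans (ler_norm_sum _ _ _) _.
have H : \sum_l `|(X ^+ k) i l * X l j| <= \sum_(l < n) (((n%:R * B) ^+ k)%:C * B%:C).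
  apply: ler_sum => l _; rewrite normrM; apply: ler_pM => //; exact: IH.
apply: le_trans H _.
rewrite sumr_const card_ord -rmorphM -rmorphMn lecR.
by rewrite exprSr -mulr_natr [n%:R * B]mulrC mulrA.
Qed.
Definition eterm n (X : 'M[C]_n) (k : nat) : 'M[C]_n := (k`!%:R)^-1 *: X ^+ k.

Lemma series_entry n (X : 'M[C]_n) N i j :
  series (eterm X) N i j = series (fun k => (k`!%:R)^-1 * (X ^+ k) i j) N.
Proof. by rewrite /series /= summxE; apply: eq_bigr => k _; rewrite mxE. Qed.

Lemma invfact_C k : ((k`!%:R)^-1 : C) = ((k`!%:R : R)^-1)%:C.
Proof. by rewrite fmorphV rmorph_nat. Qed.

Lemma eterm_bound n (X : 'M[C]_n) (B : R) : 0 <= B ->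
  (forall i j, `|X i j| <= B%:C) ->
  forall i j k, `|(k`!%:R)^-1 * (X ^+ k) i j| <= (exp_coeff (n%:R * B) k)%:C.
Proof.
move=> B0 XB i j k; rewrite /exp_coeff /= invfact_C normrM normC_real.
rewrite (@ger0_norm _ (k`!%:R : R)^-1); last by rewrite invr_ge0 ler0n.
rewrite mulrC rmorphM.
by apply: ler_pM => //; [rewrite ler0c invr_ge0 ler0n | exact: mx_pow_bound].
Qed.

Lemma expm_cvg n (X : 'M[C]_n) : series (eterm X) @ \oo --> (expm X : 'M[C]_n).
Proof.
have [B [B0 XB]] := mx_bound X.
have ce : forall i j, cvgn (fun N => series (eterm X) N i j).
  move=> i j; under eq_fun do rewrite series_entry.
  apply: series_dom (eterm_bound B0 XB i j) _.
  exact: is_cvg_series_exp_coeff.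
have cv : series (eterm X) @ \oo -->
    (\matrix_(i, j) limn (fun N => series (eterm X) N i j) : 'M[C]_n).
  by apply: mx_cvg_entry => i j; rewrite mxE; exact: (ce i j).
by rewrite /expm (cvg_lim _ cv).
Qed.
Lemma sum_enum (V : finType) (F : V -> C) :
  \sum_(i < #|V|) F (enum_val i) = \sum_x F x.
Proof. by rewrite -(big_enum_val (A := V)). Qed.

Lemma cauchy_prod_cvg (a b : nat -> C) (x y : R) :
  (forall m, `|a m| <= (exp_coeff x m)%:C) ->
  (forall m, `|b m| <= (exp_coeff y m)%:C) ->
  (fun N => series a N * series b N -
     series (fun k => \sum_(0 <= i < k.+1) a (k - i)%N * b i) N) @ \oo --> (0 : C).
Proof.
move=> ha hb.
apply: (@dom0 _ (fun N => series (exp_coeff x) N * series (exp_coeff y) N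
                          - series (exp_coeff (x + y)) N)).
  have hx := is_cvg_series_exp_coeff x.
  have hy := is_cvg_series_exp_coeff y.
  have hxy := is_cvg_series_exp_coeff (x + y).
  suff -> : (0:R) = limn (series (exp_coeff x)) * limn (series (exp_coeff y))
                    - limn (series (exp_coeff (x + y))).
    by apply: cvgB => //; apply: cvgM.
  by rewrite -/(expR x) -/(expR y) -/(expR (x + y)) expRD subrr.
move=> N /=; rewrite /series /= cauchy_diff.
have -> : \sum_(0 <= k < N) exp_coeff (x + y) k =
    \sum_(0 <= k < N) \sum_(0 <= i < k.+1) exp_coeff x (k - i)%N * exp_coeff y i.
  by apply: eq_bigr => k _; rewrite exp_coeff_conv.
rewrite cauchy_diff rmorph_sum.
apply: le_trans (ler_norm_sum _ _ _) _; apply: ler_sum => j _.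
rewrite rmorph_sum; apply: le_trans (ler_norm_sum _ _ _) _; apply: ler_sum => m _.
by rewrite normrM rmorphM; apply: ler_pM.
Qed.

Lemma cvgB0 (f g : nat -> C) (l : C) :
  f @ \oo --> l -> g @ \oo --> (0 : C) -> (fun N => f N - g N) @ \oo --> l.
Proof.
move=> hf hg; have H := cvgD hf (cvgN hg).
rewrite subr0 in H; exact: H.
Qed.

Section Kron.
Variables VG VH : finType.
Local Notation nG := #|VG|.
Local Notation nH := #|VH|.
Local Notation nP := #|{: VG * VH}|.
Local Notation rk := enum_rank.
Local Notation ev := enum_val.

Definition kron (P : 'M[C]_nG) (Q : 'M[C]_nH) : 'M[C]_nP :=
  \matrix_(p, q) (P (rk (ev p).1) (rk (ev q).1) * Q (rk (ev p).2) (rk (ev q).2)).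

Lemma sum_pair (F : 'I_nP -> C) :
  \sum_r F r = \sum_(u < nG) \sum_(v < nH) F (rk (ev u, ev v)).
Proof.
transitivity (\sum_(r < nP) F (rk (ev r))).
  by apply: eq_bigr => r _; rewrite enum_valK.
rewrite (sum_enum (fun x => F (rk x))).
rewrite (sum_enum (fun g => \sum_(v < nH) F (rk (g, ev v)))).
under [RHS]eq_bigr => g _ do rewrite (sum_enum (fun h => F (rk (g, h)))).
rewrite (pair_bigA _ (fun g h => F (rk (g, h)))) /=.
by apply: eq_bigr => -[].
Qed.
Lemma kronM P Q P' Q' : kron P Q *m kron P' Q' = kron (P *m P') (Q *m Q').
Proof.
apply/matrixP => p q; rewrite [RHS]mxE !mxE sum_pair big_distrl /=.
apply: eq_bigr => u _; rewrite big_distrr /=; apply: eq_bigr => v _.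
rewrite !mxE enum_rankK /= !enum_valK; ring.
Qed.

Lemma kron1 : kron 1%:M 1%:M = 1%:M.
Proof.
apply/matrixP => p q; rewrite !mxE.
have -> : (p == q) = ((rk (ev p).1 == rk (ev q).1) && (rk (ev p).2 == rk (ev q).2)).
  rewrite !(inj_eq enum_rank_inj) -xpair_eqE -surjective_pairing -surjective_pairing.
  by rewrite (inj_eq enum_val_inj).
by case: (_ == _); case: (_ == _); rewrite /= ?mulr1 ?mulr0 ?mul0r.
Qed.
Lemma kronX1 P a : (kron P 1%:M) ^+ a = kron (P ^+ a) 1%:M.
Proof.
elim: a => [|a IH]; first by rewrite !expr0 kron1.
by rewrite !exprS IH -!mulmxE kronM mulmx1.
Qed.

Lemma kron1X Q a : (kron 1%:M Q) ^+ a = kron 1%:M (Q ^+ a).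
Proof.
elim: a => [|a IH]; first by rewrite !expr0 kron1.
by rewrite !exprS IH -!mulmxE kronM mulmx1.
Qed.

Lemma kron_comm P Q : GRing.comm (kron P 1%:M) (kron 1%:M Q).
Proof. by rewrite /GRing.comm -!mulmxE !kronM !mulmx1 !mul1mx. Qed.

Lemma kron_powD X Y k p q :
  ((kron X 1%:M + kron 1%:M Y) ^+ k) p q =
  \sum_(i < k.+1) ((X ^+ (k - i)) (rk (ev p).1) (rk (ev q).1) *
                   (Y ^+ i) (rk (ev p).2) (rk (ev q).2)) *+ 'C(k, i).
Proof.
rewrite exprDn_comm; last exact: kron_comm.
rewrite summxE; apply: eq_bigr => i _.
by rewrite mulmxnE kronX1 kron1X -mulmxE kronM mulmx1 mul1mx mxE.
Qed.
Lemma expm_kron (X : 'M[C]_nG) (Y : 'M[C]_nH) p q :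
  (expm (kron X 1%:M + kron 1%:M Y) : 'M[C]_nP) p q =
  (expm X : 'M[C]_nG) (rk (ev p).1) (rk (ev q).1) *
  (expm Y : 'M[C]_nH) (rk (ev p).2) (rk (ev q).2).
Proof.
set Z := kron X 1%:M + kron 1%:M Y.
set g1 := rk (ev p).1; set g2 := rk (ev q).1.
set h1 := rk (ev p).2; set h2 := rk (ev q).2.
have hZ := mx_entry_cvg (i:=p) (j:=q) (expm_cvg (X:=Z)).
have hX := mx_entry_cvg (i:=g1) (j:=g2) (expm_cvg (X:=X)).
have hY := mx_entry_cvg (i:=h1) (j:=h2) (expm_cvg (X:=Y)).
have hP : (fun N => series (eterm X) N g1 g2 * series (eterm Y) N h1 h2) @ \oo -->
    (expm X : 'M[C]_nG) g1 g2 * (expm Y : 'M[C]_nH) h1 h2.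
  apply: cvgM; [exact: hX | exact: hY].
set a := fun m => (m`!%:R)^-1 * (X ^+ m) g1 g2 : C.
set b := fun m => (m`!%:R)^-1 * (Y ^+ m) h1 h2 : C.
have [BX [BX0 XB]] := mx_bound X.
have [BY [BY0 YB]] := mx_bound Y.
have hd := cauchy_prod_cvg (eterm_bound BX0 XB g1 g2) (eterm_bound BY0 YB h1 h2).
have E : forall N, series (eterm Z) N p q =
   series (eterm X) N g1 g2 * series (eterm Y) N h1 h2 -
   (series a N * series b N -
    series (fun k => \sum_(0 <= i < k.+1) a (k - i)%N * b i) N).
  move=> N; rewrite !series_entry -/a -/b opprB addrCA subrr addr0.
  rewrite /series /=; apply: eq_bigr => k _.
  rewrite kron_powD -/g1 -/g2 -/h1 -/h2 mulr_sumr big_mkord.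
  apply: eq_bigr => i _; rewrite binom_coef; last by rewrite -ltnS.
  by rewrite /a /b; ring.
have h2' : (fun N => series (eterm Z) N p q) @ \oo -->
    (expm X : 'M[C]_nG) g1 g2 * (expm Y : 'M[C]_nH) h1 h2.
  rewrite (funext E).
  refine (cvgB0 hP hd).
rewrite -(cvg_lim _ hZ) //.
by rewrite (cvg_lim _ h2').
Qed.
End Kron.
Lemma card_set_sumC (V : finType) (P : pred V) :
  (#|[set y | P y]%SET|%:R : C) = \sum_y (if P y then 1 else 0).
Proof.
rewrite -sum1_card natr_sum big_mkcond /=; apply: eq_bigr => y _.
by rewrite inE.
Qed.

Section Col.
Variables (V : finType) (adj : rel V) (Hsym : symmetric adj).

Lemma lap_colsum (m : 'I_#|V|) : \sum_u (laplacian R adj : 'M[C]_#|V|) u m = 0.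
Proof.
under eq_bigr do rewrite mxE.
rewrite sumrB (bigD1 m) //= eqxx big1 ?addr0; last by move=> u /negPf ->.
rewrite (sum_enum (fun y => if adj y (enum_val m) then 1 else 0 : C)).
rewrite card_set_sumC.
under [X in _ - X]eq_bigr do rewrite Hsym.
by rewrite subrr.
Qed.

Lemma colsum_pow (c : C) k (a : 'I_#|V|) :
  \sum_u ((c *: (laplacian R adj : 'M[C]_#|V|)) ^+ k) u a = (k == 0)%:R.
Proof.
case: k => [|k].
  rewrite expr0 (bigD1 a) //= !mxE eqxx big1 ?addr0 // => u /negPf.
  by rewrite mxE => ->.
rewrite exprS /=.
under eq_bigr do rewrite mxE.
rewrite exchange_big /=.
rewrite big1 // => l _.
rewrite -mulr_suml.
under eq_bigr do rewrite mxE.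
by rewrite -mulr_sumr lap_colsum mulr0 mul0r.
Qed.

Lemma U_colsum (t : R) (a : 'I_#|V|) : \sum_u (U adj t : 'M[C]_#|V|) u a = 1.
Proof.
set X : 'M[C]_#|V| := ('i * t%:C) *: laplacian R adj.
have H u := mx_entry_cvg (i := u) (j := a) (expm_cvg (X := X)).
have H1 := cvg_big_seq (s := index_enum 'I_#|V|) H.
rewrite /U -/X -(cvg_lim _ H1) //.
apply: lim_near_cst => //; near=> N.
have -> : N = N.-1.+1 by rewrite prednK //; near: N; exists 1%N.
rewrite /series /=.
transitivity (\sum_(0 <= k < N.-1.+1) (k`!%:R)^-1 * (k == 0)%:R : C).
  under eq_bigr do rewrite summxE.
  rewrite exchange_big /=; apply: eq_bigr => k _.
  rewrite -(@colsum_pow ('i * t%:C) k a) mulr_sumr.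
  by apply: eq_bigr => u _; rewrite mxE.
rewrite big_nat_recl // big1_seq ?addr0; last by move=> i _; rewrite mulr0.
by rewrite /= mulr1 invr1.
Unshelve. all: by end_near.
Qed.
End Col.
Section Vec.
Variable V : finType.

Lemma sum_e (M : 'M[C]_#|V|) (x : V) i :
  \sum_j M i j * e_ R x j 0 = M i (enum_rank x).
Proof.
rewrite (bigD1 (enum_rank x)) //= mxE eqxx mulr1 big1 ?addr0 //.
by move=> j /negPf; rewrite mxE => ->; rewrite mulr0.
Qed.

Lemma pairE (M : 'M[C]_#|V|) (x y z w : V) (g : C) :
  M *m pair_state R x y = g *: pair_state R z w <->
  (forall i, M i (enum_rank x) - M i (enum_rank y) =
     g * ((if i == enum_rank z then 1 else 0) - (if i == enum_rank w then 1 else 0))).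
Proof.
rewrite /pair_state mulmxBr; split.
  move=> H i; have := congr1 (fun v : 'cV[C]_#|V| => v i 0) H.
  by rewrite /= !mxE !sum_e.
move=> H; apply/colP => i; rewrite !mxE !sum_e; exact: H.
Qed.

Lemma vertE (M : 'M[C]_#|V|) (x z : V) (g : C) :
  M *m e_ R x = g *: e_ R z <->
  (forall i, M i (enum_rank x) = g * (if i == enum_rank z then 1 else 0)).
Proof.
split.
  move=> H i; have := congr1 (fun v : 'cV[C]_#|V| => v i 0) H.
  by rewrite /= !mxE sum_e.
move=> H; apply/colP => i; rewrite !mxE sum_e; exact: H.
Qed.
End Vec.

Section Prod.
Variables (VG VH : finType) (adjG : rel VG) (adjH : rel VH).
Hypotheses (HG : simple_graph adjG) (HH : simple_graph adjH).
Local Notation nG := #|VG|.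
Local Notation nH := #|VH|.
Local Notation nP := #|{: VG * VH}|.
Local Notation rk := enum_rank.
Local Notation ev := enum_val.

Lemma deg_cart (g0 : VG) (h0 : VH) :
  (#|[set y | cart_adj adjG adjH (g0, h0) y]%SET|%:R : C) =
  #|[set y | adjG g0 y]%SET|%:R + #|[set y | adjH h0 y]%SET|%:R.
Proof.
rewrite !card_set_sumC.
transitivity (\sum_(y : VG * VH)
   (if cart_adj adjG adjH (g0, h0) (y.1, y.2) then 1 else 0 : C)).
  by apply: eq_bigr => -[].
rewrite -(pair_bigA _ (fun g h => if cart_adj adjG adjH (g0, h0) (g, h) then 1 else 0 : C)) /=.
have E : forall g h, (if cart_adj adjG adjH (g0, h0) (g, h) then 1 else 0 : C) =
   (if (g0 == g) && adjH h0 h then 1 else 0) + (if adjG g0 g && (h0 == h) then 1 else 0).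
  move=> g h; rewrite /cart_adj /=.
  have [<-|ne] := eqVneq g0 g; last by rewrite /=; case: (_ && _); rewrite ?add0r.
  by rewrite (proj2 HG) /=; case: (adjH h0 h); rewrite ?addr0.
under eq_bigr => g _ do under eq_bigr => h _ do rewrite E.
under eq_bigr => g _ do rewrite big_split /=.
rewrite big_split /= addrC; congr (_ + _).
  apply: eq_bigr => g _; rewrite (bigD1 h0) //= eqxx andbT big1 ?addr0 //.
  by move=> h /negPf; rewrite eq_sym => ->; rewrite andbF.
rewrite (bigD1 g0) //= [X in _ + X]big1 ?addr0 ?eqxx //.
by move=> g /negPf; rewrite eq_sym => ->; rewrite big1.
Qed.
Lemma lap_cart : (laplacian R (cart_adj adjG adjH) : 'M[C]_nP) =
  kron (laplacian R adjG) 1%:M + kron 1%:M (laplacian R adjH).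
Proof.
apply/matrixP => p q; rewrite !mxE !enum_rankK !(inj_eq enum_rank_inj).
rewrite -(inj_eq enum_val_inj).
move: (ev p) (ev q) => [g h] [g' h'] /=.
rewrite deg_cart /cart_adj /= xpair_eqE.
have [<-|ne1] := eqVneq g g'; have [<-|ne2] := eqVneq h h';
  rewrite /= ?(proj2 HG g) ?(proj2 HH h) ?andbF ?andbT ?eqxx /=.
- by ring.
- by case: (adjH h h'); ring.
- by case: (adjG g g'); ring.
- by ring.
Qed.
Lemma U_cart (t : R) p q :
  (U (cart_adj adjG adjH) t : 'M[C]_nP) p q =
  (U adjG t : 'M[C]_nG) (rk (ev p).1) (rk (ev q).1) *
  (U adjH t : 'M[C]_nH) (rk (ev p).2) (rk (ev q).2).
Proof.
rewrite /U lap_cart.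
have -> : ('i * t%:C) *: (kron (laplacian R adjG) 1%:M + kron 1%:M (laplacian R adjH)) =
   kron (('i * t%:C) *: laplacian R adjG) 1%:M + kron 1%:M (('i * t%:C) *: laplacian R adjH).
  by apply/matrixP => a b; rewrite !mxE; ring.
exact: expm_kron.
Qed.
Lemma rk_pair_eq p (x : VG) (y : VH) :
  (p == rk (x, y)) = (rk (ev p).1 == rk x) && (rk (ev p).2 == rk y).
Proof.
rewrite -(inj_eq enum_val_inj) enum_rankK !(inj_eq enum_rank_inj).
by case: (ev p) => g h; rewrite xpair_eqE.
Qed.

Lemma main_aux (a b : VG) (alpha beta gamma kappa : VH)
  (Hgk : gamma != kappa) (t : R) :
  pair_PST (cart_adj adjG adjH) t (a, alpha) (a, beta) (b, gamma) (b, kappa)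
  <-> vertex_PST adjG t a b /\ pair_PST adjH t alpha beta gamma kappa.
Proof.
split.
- move=> [g [ng /pairE H]].
  have g0 : g != 0 by rewrite -normr_eq0 ng oner_eq0.
  have Hp u v : (U adjG t : 'M[C]_nG) u (rk a) *
      ((U adjH t : 'M[C]_nH) v (rk alpha) - (U adjH t : 'M[C]_nH) v (rk beta)) =
      g * ((if (u == rk b) && (v == rk gamma) then 1 else 0) -
           (if (u == rk b) && (v == rk kappa) then 1 else 0)).
    have := H (rk (ev u, ev v)).
    by rewrite !U_cart !enum_rankK /= !enum_valK !rk_pair_eq !enum_rankK /= !enum_valK -mulrBr.
  have gk : (rk gamma == rk kappa) = false by rewrite (inj_eq enum_rank_inj) (negPf Hgk).
  have Wg : (U adjH t : 'M[C]_nH) (rk gamma) (rk alpha) -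
            (U adjH t : 'M[C]_nH) (rk gamma) (rk beta) != 0.
    apply/negP => /eqP W0; have := Hp (rk b) (rk gamma).
    rewrite W0 mulr0 !eqxx gk /= subr0 mulr1 => /esym/eqP.
    by rewrite (negPf g0).
  have UG0 u : u != rk b -> (U adjG t : 'M[C]_nG) u (rk a) = 0.
    move=> /negPf ub; have := Hp u (rk gamma); rewrite ub /= subrr mulr0 => /eqP.
    by rewrite mulf_eq0 (negPf Wg) orbF => /eqP.
  have UGb : (U adjG t : 'M[C]_nG) (rk b) (rk a) = 1.
    have := U_colsum (proj1 HG) t (rk a).
    by rewrite (bigD1 (rk b)) //= big1 ?addr0 // => u; exact: UG0.
  split.
    exists 1; split; first by rewrite normr1.
    apply/vertE => u; have [->|ub] := eqVneq u (rk b); first by rewrite UGb mulr1.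
    by rewrite UG0 // mulr0.
  exists g; split => //; apply/pairE => v.
  by have := Hp (rk b) v; rewrite UGb mul1r eqxx /=.
- move=> [[g1 [n1 /vertE H1]] [g2 [n2 /pairE H2]]].
  exists (g1 * g2); split; first by rewrite normrM n1 n2 mulr1.
  apply/pairE => p.
  rewrite !U_cart !enum_rankK /= -mulrBr H1 H2 !rk_pair_eq.
  by case: (rk (ev p).1 == rk b); case: (rk (ev p).2 == rk gamma);
    case: (rk (ev p).2 == rk kappa); rewrite /=; ring.
Qed.
End Prod.
End An.

End Aux.

Theorem mainTheorem3 (R : realType)
  (VG VH : finType) (adjG : rel VG) (adjH : rel VH)
  (HG : simple_graph adjG) (HH : simple_graph adjH)
  (a b : VG) (alpha beta gamma kappa : VH)
  (Hab : alpha != beta) (Hgk : gamma != kappa) (t : R) :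
  pair_PST (cart_adj adjG adjH) t (a, alpha) (a, beta) (b, gamma) (b, kappa)
  <-> vertex_PST adjG t a b /\ pair_PST adjH t alpha beta gamma kappa.
Proof.
exact: Aux.main_aux.
Qed.
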